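(* Let $m\ge3$ be an integer and $p>m$ a prime not dividing $m$, and let $D=\{1,2,\dots,m-1\}\cup\{p^n:n\in\mathbb{N}\}$. Then $\chi(\mathbb{N}_D)=m$ and $\operatorname{doa}(D)=1$, so $\chi(\mathbb{N}_D)/\operatorname{doa}(D)=m$.
   Context: For $D\subseteq\mathbb{N}$, $\mathbb{N}_D$ is the graph with vertex set $\mathbb{N}$ in which $x,y$ are adjacent iff $|x-y|\in D$; $\chi(\mathbb{N}_D)$ is its chromatic number. A $k$-term $D$-diffsequence is a sequence of integers $x_1,\dots,x_k$ with $x_{i+1}-x_i\in D$ for all $i$; $D$ is $r$-accessible if every $r$-coloring of $\mathbb{N}$ admits monochromatic $k$-term $D$-diffsequences for all $k$, and $\operatorname{doa}(D)$ is the greatest $r$ for which $D$ is $r$-accessible. *)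

(* Defs.v *)
(* naturals (ssrnat). N = nat (0 included). *)
From mathcomp Require Import all_boot.
Set Implicit Arguments. Unset Strict Implicit. Unset Printing Implicit Defensive.

(* A distance set D is a predicate on nat (elements are meant positive). *)

(* A proper r-coloring of the distance graph N_D: vertices x,y adjacent iff |x-y| \in D. *)
Definition proper_coloring (D : nat -> Prop) (r : nat) (c : nat -> nat) : Prop :=
  (forall x, c x < r) /\
  (forall x y, x < y -> D (y - x) -> c x <> c y).

Definition colorable (D : nat -> Prop) (r : nat) : Prop :=
  exists c : nat -> nat, proper_coloring D r c.

Definition chromatic_number_is (D : nat -> Prop) (k : nat) : Prop :=
  colorable D k /\ forall j, colorable D j -> k <= j.

Definition diffseq (D : nat -> Prop) (k : nat) (x : nat -> nat) : Prop :=
  forall i, i.+1 < k -> x i < x i.+1 /\ D (x i.+1 - x i).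

Definition accessible (D : nat -> Prop) (r : nat) : Prop :=
  forall c : nat -> nat, (forall x, c x < r) ->
  forall k, exists x : nat -> nat,
    diffseq D k x /\ (forall i, i < k -> c (x i) = c (x 0)).

Definition doa_is (D : nat -> Prop) (r : nat) : Prop :=
  accessible D r /\ forall r', accessible D r' -> r' <= r.

Definition Dmp (m p : nat) (d : nat) : Prop :=
  (1 <= d <= m - 1) \/ exists n : nat, d = p ^ n.

(* Main.v *)
Require Import Defs.
From mathcomp Require Import all_boot.
From mathcomp Require Import zify.

Lemma step_q p m a d : 0 < p -> odd p -> m < p -> Dmp m p d ->
  odd ((a + d) %/ p) = odd (a %/ p) -> (a + d) %/ p = a %/ p.
Proof.
move=> p0 op mp Dd Hodd.
have small : d < p -> (a + d) %/ p = a %/ p.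
  move=> dp.
  have Ha : a = a %/ p * p + a %% p by rewrite -divn_eq.
  have Hr : a %% p < p by rewrite ltn_mod.
  have E : (a + d) %/ p = a %/ p + (a %% p + d) %/ p.
    by rewrite {1}Ha -addnA divnMDl.
  have L : (a %% p + d) %/ p < 2 by rewrite ltn_divLR //; lia.
  move: Hodd; rewrite E oddD.
  case: ((a %% p + d) %/ p) L => [|[|k]] //= _.
  - by rewrite addn0.
  - by case: (odd _).
case: Dd => [Hd|[n Hn]]; first by apply: small; lia.
subst d.
case: n small Hodd => [|n] small Hodd; first by apply: small; rewrite expn0; lia.
move: Hodd; rewrite divnDr ?dvdn_exp // oddD expnS mulKn // oddX op orbT.
by case: (odd _).
Qed.

Theorem mainTheorem14 (m p : nat) :
  3 <= m -> prime p -> m < p -> ~~ (p %| m) ->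
  chromatic_number_is (Dmp m p) m /\ doa_is (Dmp m p) 1.
Proof.
move=> m3 pp mp npm.
have cpm : coprime p m by rewrite prime_coprime.
clear npm.
have p0 : 0 < p by apply: prime_gt0.
have op : odd p.
  case: (even_prime pp) => // p2; lia.
split; [split|split].
- exists (fun x => x %% m); split; first by move=> x; rewrite ltn_mod; lia.
  move=> x y xy Dd Heq.
  have : m %| y - x by rewrite -eqn_mod_dvd ?(ltnW xy) // Heq.
  clear Heq; case: Dd => [Hd|[n Hn]].
  + move/dvdn_leq => H; case/andP: Hd => H1 H2.
    have := H H1; rewrite leqNgt => /negP; apply.
    apply: (leq_ltn_trans H2); clear -m3; lia.
  + rewrite Hn => Hdvd.
    have cop : coprime m (p ^ n).
      by apply: coprimeXr; rewrite coprime_sym.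
    move: cop; rewrite /coprime (gcdn_idPl Hdvd) => /eqP m1.
    by move: m3; rewrite m1.
- move=> j [c [Hc Hp]].
  have inj : injective (fun i : 'I_m => Ordinal (Hc i)).
    move=> i i' /(congr1 val) /= Hci.
    apply: val_inj => /=.
    have Hi := ltn_ord i; have Hi' := ltn_ord i'.
    case: (ltngtP i i') => // H.
    + exfalso; apply: (Hp _ _ H _ Hci); left; lia.
    + exfalso; apply: (Hp _ _ H _ (esym Hci)); left; lia.
  by have := @leq_card _ _ _ inj; rewrite !card_ord.
- move=> c Hc k; exists (fun i => i); split.
  + move=> i _; split => //; rewrite subSnn; left; lia.
  + move=> i _; have := Hc i; have := Hc 0; lia.
- move=> r Hacc; case: (leqP r 1) => // r2; exfalso.
  have [x [Hd Hmono]] := Hacc (fun x => (x %/ p) %% 2)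
     ltac:(move=> y /=; apply: (leq_trans _ r2); by rewrite ltn_mod) p.+1.
  have key : forall i, i <= p -> x i %/ p = x 0 %/ p /\ x 0 + i <= x i.
    elim => [|i IH] Hi; first by rewrite addn0.
    have [IH1 IH2] := IH (ltnW Hi).
    have Hi1 : i.+1 < p.+1 by rewrite ltnS.
    have [Hlt HD] := Hd i Hi1.
    have E : x i.+1 = x i + (x i.+1 - x i) by rewrite subnKC // ltnW.
    have Hc1 := Hmono i.+1 Hi1.
    have Hc0 := Hmono i (ltnW Hi1).
    have Hq : x i.+1 %/ p = x i %/ p.
      rewrite E; apply: (@step_q p m (x i) _ p0 op mp HD).
      rewrite -E; move: Hc1 Hc0; rewrite !modn2.
      by case: (odd (x i.+1 %/ p)); case: (odd (x i %/ p)); case: (odd (x 0 %/ p)).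
    split; first by rewrite Hq.
    by rewrite addnS; apply: leq_ltn_trans Hlt.
  have [K1 K2] := key p (leqnn p).
  have : (x 0 + p) %/ p <= x p %/ p by apply: leq_div2r.
  by rewrite divnDr ?dvdnn // divnn p0 K1 addn1 ltnn.
Qed.
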